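(* There is a constant $C>0$ (independent of $N$ and $k$) such that for every $k\in\mathbb{Z}^2$, $$\hbar^2\sum_{p\in L_k}\lambda_{k,p}^{-1}\le C\log(N),$$ where $L_k=B_{\mathrm F}^c\cap(B_{\mathrm F}+k)$ and $\lambda_{k,p}=\frac12\hbar^2(|p|^2-|p-k|^2)$.
   Context: $N=|B_{\mathrm F}|$ with $B_{\mathrm F}=\{k\in\mathbb{Z}^2:|k|<k_{\mathrm F}\}$ for $k_{\mathrm F}>0$ with $k_{\mathrm F}^2=\frac12(\inf_{p\notin B_{\mathrm F}}|p|^2+\sup_{q\in B_{\mathrm F}}|q|^2)$; $B_{\mathrm F}^c=\mathbb{Z}^2\setminus B_{\mathrm F}$; $\hbar=N^{-1/2}$. (For $k=0$, $L_k=\emptyset$.) *)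

(* Defs.v *)
From HB Require Import structures.
From mathcomp Require Import all_boot all_order all_algebra.
From mathcomp Require Import all_classical all_reals.
From mathcomp Require Import exp.
Set Implicit Arguments. Unset Strict Implicit. Unset Printing Implicit Defensive.
Import Order.TTheory GRing.Theory Num.Theory.
Local Open Scope classical_set_scope.
Local Open Scope ring_scope.

Definition Z2 := (int * int)%type.
Definition addZ2 (p q : Z2) : Z2 := (p.1 + q.1, p.2 + q.2).
Definition subZ2 (p q : Z2) : Z2 := (p.1 - q.1, p.2 - q.2).

Definition sqnorm {R : realType} (p : Z2) : R := ((p.1 ^+ 2 + p.2 ^+ 2)%R)%:~R.

Definition BF {R : realType} (kF : R) : set Z2 := [set p | sqnorm p < kF ^+ 2].

Definition admissible_kF {R : realType} (kF : R) : Prop :=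
  0 < kF /\
  kF ^+ 2 = 2^-1 * (inf [set (sqnorm p : R) | p in ~` BF kF]
                    + sup [set (sqnorm q : R) | q in BF kF]).

Definition NF {R : realType} (kF : R) : nat := (\sum_(p \in BF kF) 1)%N.

Definition hbar {R : realType} (kF : R) : R := (Num.sqrt (NF kF)%:R)^-1.

Definition Lk {R : realType} (kF : R) (k : Z2) : set Z2 :=
  (~` BF kF) `&` [set p | exists2 q, BF kF q & p = addZ2 q k].

Definition lambda {R : realType} (kF : R) (k p : Z2) : R :=
  2^-1 * hbar kF ^+ 2 * (sqnorm p - sqnorm (subZ2 p k)).

(* Main.v *)
Require Import Defs.
From HB Require Import structures.
From mathcomp Require Import all_boot all_order all_algebra.
From mathcomp Require Import all_classical all_reals.
From mathcomp Require Import exp.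
From mathcomp Require Import ring lra zify.
Import Order.TTheory GRing.Theory Num.Theory.
Local Open Scope classical_set_scope.
Local Open Scope ring_scope.
Section A.
Variable R : realType.

Lemma sum_invsqrt (m : nat) :
  \sum_(i < m) (Num.sqrt (i.+1)%:R : R)^-1 <= 2 * Num.sqrt m%:R.
Proof.
elim: m => [|m IH]; first by rewrite big_ord0 sqrtr0 mulr0.
rewrite big_ord_recr /=.
set s := Num.sqrt (m.+1)%:R : R. set r := Num.sqrt m%:R : R.
have s2 : s ^+ 2 = m.+1%:R by rewrite sqr_sqrtr.
have r2 : r ^+ 2 = m%:R by rewrite sqr_sqrtr.
have s0 : 0 < s by rewrite sqrtr_gt0 ltr0n.
have r0 : 0 <= r by rewrite sqrtr_ge0.
have key : s^-1 <= 2 * s - 2 * r.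
  rewrite -(ler_pM2l s0) mulfV ?gt_eqF //.
  have : (s - r) ^+ 2 >= 0 by apply: sqr_ge0.
  rewrite -natr1 in s2. nra.
apply: le_trans (lerD IH key) _. rewrite -/r. lra.
Qed.

Lemma harm (n : nat) :
  \sum_(i < n) ((i.+1)%:R : R)^-1 <= 1 + ln (n%:R : R).
Proof.
elim: n => [|n IH]; first by rewrite big_ord0 ln0 // addr0.
rewrite big_ord_recr /=.
case: n IH => [|n] IH.
  by rewrite big_ord0 add0r invr1 ln1 addr0.
suff key : ((n.+2)%:R : R)^-1 <= ln (n.+2)%:R - ln (n.+1)%:R.
  apply: le_trans (lerD IH key) _. lra.
have h1 : ln ((n.+1)%:R : R) - ln (n.+2)%:R = ln (1 + (- ((n.+2)%:R)^-1)).
  rewrite -ln_div ?posrE ?ltr0n //; congr ln.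
  apply: (@mulIf _ (n.+2)%:R); first by rewrite pnatr_eq0.
  rewrite mulrDl mul1r mulNr mulVf ?pnatr_eq0 // mulfVK ?pnatr_eq0 //.
  by rewrite -!natr1; ring.
have h2 : ln (1 + (- ((n.+2)%:R)^-1)) <= - ((n.+2)%:R : R)^-1.
  apply: le_ln1Dx. rewrite ltrN2 invf_lt1 ?ltr0n // ltr1n //.
by rewrite -h1 lerNr opprB in h2.
Qed.

Lemma ln2_ge : 2^-1 <= ln (2 : R).
Proof.
have h : ln (1 + (- 2^-1)) <= - (2 : R)^-1 by apply: le_ln1Dx; lra.
rewrite (_ : 1 + - 2^-1 = 2^-1) in h; last by lra.
by rewrite lnV ?posrE // lerN2 in h.
Qed.
End A.
Section B.
Variable R : realType.

Lemma sum_const_seq (T : Type) (s : seq T) (c : R) : \sum_(i <- s) c = c *+ size s.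
Proof. by elim: s => [|x s IH]; rewrite ?big_nil ?big_cons ?IH ?mulrS. Qed.

Lemma fsbig_le (T : choiceType) (A : set T) (f g : T -> R) :
  finite_set A -> (forall x, A x -> f x <= g x) ->
  \sum_(x \in A) f x <= \sum_(x \in A) g x.
Proof.
move=> Af fg; rewrite !fsbig_finite // big_seq [X in _ <= X]big_seq.
apply: ler_sum => x xA.
by apply: fg; rewrite in_fset_set // inE in xA.
Qed.

Lemma fsbig_subset_le (T : choiceType) (A B : set T) (f : T -> R) :
  finite_set B -> A `<=` B -> (forall x, B x -> 0 <= f x) ->
  \sum_(x \in A) f x <= \sum_(x \in B) f x.
Proof.
move=> Bf AB f0.
have -> : \sum_(x \in A) f x = \sum_(x \in B) (if x \in A then f x else 0).
  rewrite (eq_fsbigr (fun x => if x \in A then f x else 0)); last first.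
    by move=> x xA; rewrite xA.
  apply: fsbig_widen => // x [Bx nAx] /=.
  by rewrite /preimage /= ifF //; apply/negbTE; rewrite notin_setE.
apply: fsbig_le => // x Bx; case: ifP => _ //; exact: f0.
Qed.

Lemma fsbig_count (S : set int) (c E : R) :
  finite_set S -> 0 <= c -> 0 <= E ->
  (forall t t', S t -> S t' -> (`|t - t'|)%:~R <= E) ->
  \sum_(t \in S) c <= (2 * E + 1) * c.
Proof.
move=> Sf c0 E0 HS.
have [->|/set0P [t0 St0]] := eqVneq S set0.
  by rewrite fsbig_set0 mulr_ge0 //; lra.
rewrite fsbig_finite // sum_const_seq.
set m := Num.trunc E.
have mE : (m%:R <= E) by have /andP[] := truncn_itv E0.
have Hb : forall t, S t -> (`|t - t0| <= m%:Z)%R.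
  move=> t St; have := HS t t0 St St0.
  rewrite -[`|t - t0|]gez0_abs ?normr_ge0 // abszE.
  move=> h. have : (absz (t - t0) <= m)%N by rewrite truncn_ge_nat.
  lia.
set s := finmap.enum_fset (fset_set S).
have sz : (size s <= 2 * m + 1)%N.
  pose f (t : int) := absz (t - t0 + m%:Z).
  have us : uniq s by apply: finmap.fset_uniq.
  rewrite -(size_map f) -[X in (_ <= X)%N](size_iota 0).
  apply: uniq_leq_size.
    rewrite map_inj_in_uniq // => x y xs ys.
    move: xs ys; rewrite /s !in_fset_set // !inE => xs ys.
    have := Hb x xs; have := Hb y ys; rewrite /f; lia.
  move=> z /mapP [x xs ->]; rewrite /s in_fset_set // inE in xs.
  have := Hb x xs; rewrite mem_iota /f; lia.
rewrite -[c *+ _]mulr_natl; apply: ler_wpM2r => //.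
have : ((size s)%:R <= (2 * m + 1)%:R :> R) by rewrite ler_nat.
rewrite natrD natrM. lra.
Qed.
End B.
Lemma int_aux1 (g z : int) (i : nat) : 0 < g -> 1 <= z -> (i.+1)%:Z <= g * (z + 2 * i%:Z).
Proof. move=> h1 h2; nia. Qed.
Lemma int_aux2 (g z : int) (i : nat) : 0 < g -> 1 <= z -> z <= g * (z + 2 * i%:Z).
Proof. move=> h1 h2; nia. Qed.

Lemma int_aux3 (F j : int) : F < j -> F + 1 <= j.
Proof. lia. Qed.

Lemma int_aux4 (a j : int) : a <= j -> a + (`|j - a|%N)%:Z = j.
Proof. lia. Qed.

Section C.
Variables (a' b' u v g : int).
Hypothesis huv : u * a' + v * b' = 1.

Definition phi (x : Z2) : Z2 := (x.1 * u - x.2 * b', x.1 * v + x.2 * a').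
Definition psi (p : Z2) : Z2 := (p.1 * a' + p.2 * b', - (v * p.1) + u * p.2).
Definition alpha : int := a' ^+ 2 + b' ^+ 2.
Definition beta : int := u * b' - v * a'.
Definition yv (x : Z2) : int := x.2 * alpha - x.1 * beta.
Definition kk : Z2 := (g * a', g * b').
Definition sq (p : Z2) : int := p.1 ^+ 2 + p.2 ^+ 2.

Lemma dot_phi x : (phi x).1 * a' + (phi x).2 * b' = x.1.
Proof.
have -> : (phi x).1 * a' + (phi x).2 * b' = x.1 * (u * a' + v * b') by rewrite /phi /=; ring.
by rewrite huv mulr1.
Qed.

Lemma psiK x : psi (phi x) = x.
Proof.
case: x => j t; rewrite /psi dot_phi; congr pair.
have -> : - (v * (phi (j, t)).1) + u * (phi (j, t)).2 = t * (u * a' + v * b') by rewrite /phi /=; ring.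
by rewrite huv mulr1.
Qed.

Lemma phiK p : phi (psi p) = p.
Proof.
case: p => p1 p2; rewrite /phi /psi /=; congr pair.
  have -> : (p1 * a' + p2 * b') * u - (- (v * p1) + u * p2) * b' = p1 * (u * a' + v * b') by ring.
  by rewrite huv mulr1.
have -> : (p1 * a' + p2 * b') * v + (- (v * p1) + u * p2) * a' = p2 * (u * a' + v * b') by ring.
by rewrite huv mulr1.
Qed.

Lemma alpha_gt0 : 0 < alpha.
Proof.
rewrite /alpha; have : u * a' + v * b' = 1 := huv.
case: (eqVneq a' 0) => [->|a0]; case: (eqVneq b' 0) => [->|b0]; try nia.
Qed.

Lemma I1 x : alpha * sq (phi x) = x.1 ^+ 2 + (yv x) ^+ 2.
Proof.
have L : alpha * sq (phi x) = ((phi x).1 * a' + (phi x).2 * b') ^+ 2 + ((phi x).1 * b' - (phi x).2 * a') ^+ 2.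
  by rewrite /alpha /sq; ring.
rewrite L dot_phi; congr (_ + _).
by rewrite /phi /yv /alpha /beta /=; ring.
Qed.

Lemma I2 x : alpha * sq (subZ2 (phi x) kk) = (x.1 - g * alpha) ^+ 2 + (yv x) ^+ 2.
Proof.
set p := subZ2 (phi x) kk.
have L : alpha * sq p = (p.1 * a' + p.2 * b') ^+ 2 + (p.1 * b' - p.2 * a') ^+ 2.
  by rewrite /alpha /sq; ring.
have E1 : p.1 * a' + p.2 * b' = ((phi x).1 * a' + (phi x).2 * b') - g * alpha.
  by rewrite /p /subZ2 /kk /alpha /=; ring.
rewrite L E1 dot_phi; congr (_ + _).
by rewrite /p /subZ2 /kk /phi /yv /alpha /beta /=; ring.
Qed.

Lemma I3 x : sq (phi x) - sq (subZ2 (phi x) kk) = g * (2 * x.1 - g * alpha).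
Proof.
have L : sq (phi x) - sq (subZ2 (phi x) kk) = 2 * g * ((phi x).1 * a' + (phi x).2 * b') - g ^+ 2 * alpha.
  by rewrite /sq /subZ2 /kk /alpha /=; ring.
by rewrite L dot_phi; ring.
Qed.

End C.
Section D0.
Variable R : realType.

Lemma pair_real (al D Q Y Y2 e : R) : 0 < al -> 0 <= e -> 0 <= Y ->
  Y2 - Y = e * al -> Q <= Y ^+ 2 -> Y2 ^+ 2 < Q + al * D ->
  e ^+ 2 * al <= D /\ e ^+ 2 * Q <= D ^+ 2.
Proof.
move=> al0 e0 Y0 hY hQ hY2.
have eY : Y2 = Y + e * al by lra.
rewrite eY in hY2.
have h0 : al * (2 * Y * e + e ^+ 2 * al) < al * D.
  have : (Y + e * al) ^+ 2 = Y ^+ 2 + al * (2 * Y * e + e ^+ 2 * al) by ring.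
  lra.
rewrite ltr_pM2l // in h0.
have Ye : 0 <= Y * e by apply: mulr_ge0.
split; first by nra.
have eY20 : 0 <= e * Y2 by rewrite eY; nra.
have eY2D : e * Y2 <= D by rewrite eY; nra.
have h2 : (e * Y2) ^+ 2 <= D ^+ 2 by nra.
have h3 : Q <= Y2 ^+ 2 by rewrite eY; nra.
have h4 : e ^+ 2 * Q <= e ^+ 2 * Y2 ^+ 2 by apply: ler_wpM2l => //; apply: sqr_ge0.
nra.
Qed.

Lemma LkP (kF : R) (k p : Z2) :
  Lk kF k p <-> kF ^+ 2 <= sqnorm p /\ sqnorm (subZ2 p k) < kF ^+ 2.
Proof.
split.
  move=> [nB [q Bq pE]]; rewrite pE in nB *; split.
    by rewrite leNgt; apply/negP.
  have -> : subZ2 (addZ2 q k) k = q.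
    by case: q {Bq pE nB} => q1 q2; rewrite /subZ2 /addZ2 /= !addrK.
  exact: Bq.
move=> [h1 h2]; split.
  by move=> /= hB; move: h1; rewrite leNgt hB.
exists (subZ2 p k) => //.
by case: p {h1 h2} => p1 p2; rewrite /subZ2 /addZ2 /= !subrK.
Qed.
End D0.

Section D1.
Variable R : realType.
Lemma le_div_sqrt (e D Z : R) : 0 < Z -> 0 <= e -> 0 <= D ->
  e ^+ 2 * Z <= D ^+ 2 -> e <= D / Num.sqrt Z.
Proof.
move=> Z0 e0 D0 h.
have s0 : 0 < Num.sqrt Z by rewrite sqrtr_gt0.
have s2 : Num.sqrt Z ^+ 2 = Z by rewrite sqr_sqrtr // ltW.
rewrite ler_pdivlMr //.
have h' : (e * Num.sqrt Z) ^+ 2 <= D ^+ 2 by rewrite exprMn s2.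
have es : 0 <= e * Num.sqrt Z by rewrite mulr_ge0 // ltW.
nra.
Qed.
End D1.
Section E.
Variable R : realType.

Lemma sum_filter_le n (P : pred 'I_n) (h : 'I_n -> R) : (forall i, 0 <= h i) ->
  \sum_(i < n | P i) h i <= \sum_(i < n) h i.
Proof. by move=> h0; rewrite big_mkcond; apply: ler_sum => i _; case: ifP. Qed.

Lemma G1 (f g : nat -> R) n m : (forall i, 0 <= g i) ->
  (forall i, (i < n)%N -> f i <= (if (i < m)%N then g i else 0)) ->
  \sum_(i < n) f i <= \sum_(i < m) g i.
Proof.
move=> g0 H.
apply: le_trans (ler_sum _ (fun (i : 'I_n) _ => H i (ltn_ord i))) _.
set h := fun i : nat => if (i < m)%N then g i else 0.
have h0 : forall i, 0 <= h i by move=> i; rewrite /h; case: ifP.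
rewrite (big_ord_widen (n + m) h (leq_addr m n)).
apply: le_trans (@sum_filter_le (n + m) (fun i => (i < n)%N) (fun i => h i) (fun i => h0 i)) _.
rewrite (big_ord_widen (n + m) g (leq_addl n m)) [X in _ <= X]big_mkcond /=.
by apply: ler_sum => i _; rewrite /h.
Qed.

Lemma G2 (f g : nat -> R) n m : (forall i, 0 <= g i) ->
  (forall i, (i < n)%N -> f i <= (if (m <= i)%N then g (i - m)%N else 0)) ->
  \sum_(i < n) f i <= \sum_(k < n - m) g k.
Proof.
move=> g0 H.
apply: le_trans (ler_sum _ (fun (i : 'I_n) _ => H i (ltn_ord i))) _.
case: (leqP n m) => nm.
  rewrite big1; first by apply: sumr_ge0 => i _.
  move=> i _; have : ~~ (m <= i)%N by rewrite -ltnNge (leq_trans (ltn_ord i) nm).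
  by move/negbTE => ->.
rewrite -(big_mkord xpredT (fun i => if (m <= i)%N then g (i - m)%N else 0)).
rewrite (big_cat_nat (leq0n m) (ltnW nm)) /=.
rewrite big_nat_cond big1 ?add0r; last first.
  by move=> i /andP[/andP[_ im] _]; rewrite leqNgt im.
rewrite (big_addn 0 n m) big_mkord.
apply: ler_sum => i _; rewrite leq_addl addnK //.
Qed.

Lemma sum_rev_sqrt m :
  \sum_(i < m) (Num.sqrt ((m - i)%N)%:R : R)^-1 = \sum_(i < m) (Num.sqrt (i.+1)%:R)^-1.
Proof.
rewrite -(big_mkord xpredT (fun i => (Num.sqrt (i.+1)%:R : R)^-1)).
rewrite big_rev_mkord subn0; apply: eq_bigr => i _.
by rewrite subnSK.
Qed.
End E.
Section D.
Variable R : realType.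
Variables (kF : R) (a' b' u v g : int).
Hypotheses (kF0 : 0 < kF) (g0 : 0 < g) (huv : u * a' + v * b' = 1).
Hypothesis Bfin : finite_set (BF kF).

Let al : int := alpha a' b'.
Let alR : R := al%:~R.
Let W : R := alR * kF ^+ 2.
Let J0 : R := Num.sqrt W.
Let ga : R := (g * al)%:~R.
Let ph := phi a' b' u v.
Let y := yv a' b' u v.
Let k := kk a' b' g.
Let A : set Z2 := ph @^-1` (Lk kF k).
Let Dj (j : int) : R := (g * (2 * j - g * al))%:~R.

Let al0 : 0 < al := @alpha_gt0 a' b' u v huv.
Let alR0 : 0 < alR. Proof. by rewrite ltr0z. Qed.
Let W0 : 0 < W. Proof. by rewrite /W mulr_gt0 // exprn_gt0. Qed.
Let J0sq : J0 ^+ 2 = W. Proof. by rewrite /J0 sqr_sqrtr // ltW. Qed.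
Let J00 : 0 < J0. Proof. by rewrite /J0 sqrtr_gt0. Qed.

Lemma A_cond x : A x ->
  W <= (x.1 ^+ 2 + y x ^+ 2)%:~R /\ ((x.1 - g * al) ^+ 2 + y x ^+ 2)%:~R < W.
Proof.
move=> /LkP [h1 h2].
rewrite -(@I1 a' b' u v huv) -(@I2 a' b' u v g huv) !rmorphM /=.
by split; [rewrite /W ler_pM2l | rewrite /W ltr_pM2l].
Qed.

Lemma A_z x : A x -> 0 < 2 * x.1 - g * al.
Proof.
move=> Ax; have [h1 h2] := A_cond _ Ax.
have := lt_le_trans h2 h1; rewrite ltr_int => h.
have : 0 < g * al by rewrite mulr_gt0.
move: (g * al) h => G h G0.
nia.
Qed.

Lemma A_J0 x : A x -> ga - J0 < x.1%:~R /\ x.1%:~R < ga + J0.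
Proof.
move=> Ax; have [_ h2] := A_cond _ Ax; have J0p := J00.
have h : (x.1%:~R - ga) ^+ 2 < J0 ^+ 2.
  rewrite J0sq; apply: le_lt_trans h2.
  rewrite /ga -rmorphB -rmorphXn ler_int lerDl.
  exact: sqr_ge0.
split; rewrite ltNge; apply/negP => H.
  have H1 : 0 <= ga - J0 - x.1%:~R by lra.
  have H2 : 0 <= (ga - J0 - x.1%:~R) * (ga + J0 - x.1%:~R) by apply: mulr_ge0 => //; lra.
  have : (x.1%:~R - ga) ^+ 2 = (ga - J0 - x.1%:~R) * (ga + J0 - x.1%:~R) + J0 ^+ 2 by ring.
  lra.
have H1 : 0 <= x.1%:~R - ga - J0 by lra.
have H2 : 0 <= (x.1%:~R - ga - J0) * (x.1%:~R - ga + J0) by apply: mulr_ge0 => //; lra.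
have : (x.1%:~R - ga) ^+ 2 = (x.1%:~R - ga - J0) * (x.1%:~R - ga + J0) + J0 ^+ 2 by ring.
lra.
Qed.

Lemma pair_bound j t t' : A (j, t) -> A (j, t') ->
  (0 <= y (j, t)) = (0 <= y (j, t')) ->
  ((`|t - t'|)%:~R) ^+ 2 * alR <= Dj j /\
  ((`|t - t'|)%:~R) ^+ 2 * (W - (j%:~R) ^+ 2) <= (Dj j) ^+ 2.
Proof.
wlog tt : t t' / t <= t'.
  move=> H At At' s; case: (boolP (t <= t')) => h; first exact: H.
  rewrite -ltNge in h.
  by rewrite distrC; apply: (H t' t) => //; try exact: ltW; rewrite s.
move=> At At' s.
have yd : y (j, t') - y (j, t) = (t' - t) * al by rewrite /y /yv /= /al; ring.
have [c1 c2] := A_cond _ At; have [c1' c2'] := A_cond _ At'.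
have ad : alR * Dj j = ((j ^+ 2 - (j - g * al) ^+ 2))%:~R.
  by rewrite /alR /Dj -rmorphM; congr intr; ring.
have nt : `|t - t'| = t' - t by rewrite distrC ger0_norm // subr_ge0.
rewrite nt.
rewrite /= !rmorphD !rmorphXn /= in c1 c2 c1' c2'.
rewrite rmorphB !rmorphXn /= in ad.
have e0 : 0 <= ((t' - t)%:~R : R) by rewrite ler0z subr_ge0.
case: (lerP 0 (y (j, t))) => hy.
  have hy' : 0 <= y (j, t') by rewrite -s.
  apply: (@pair_real R alR (Dj j) (W - (j%:~R) ^+ 2) (y (j, t))%:~R (y (j, t'))%:~R) => //.
  - by rewrite ler0z.
  - by rewrite -rmorphB yd rmorphM.
  - lra.
  - lra.
have hy' : y (j, t') < 0 by rewrite ltNge -s -ltNge.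
apply: (@pair_real R alR (Dj j) (W - (j%:~R) ^+ 2) (- (y (j, t'))%:~R) (- (y (j, t))%:~R)) => //.
- by rewrite oppr_ge0 lerz0 ltW.
- rewrite opprK addrC -rmorphB yd rmorphM //.
- rewrite sqrrN; lra.
- rewrite sqrrN; lra.
Qed.

Definition FF (x : Z2) : R := 2 * (Dj x.1)^-1.
Let P : set int := fst @` A.
Let Q : set int := snd @` A.

Let Lfin : finite_set (Lk kF k).
Proof.
apply: (sub_finite_set _ (finite_image (fun q => addZ2 q k) Bfin)).
move=> p /LkP [_ h]; exists (subZ2 p k) => //.
by case: p {h} => p1 p2; rewrite /subZ2 /addZ2 /= !subrK.
Qed.

Let Afin : finite_set A.
Proof.
apply: (sub_finite_set _ (finite_image (psi a' b' u v) Lfin)).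
move=> x Ax; exists (ph x) => //; exact: (@psiK a' b' u v huv).
Qed.

Let Qfin : finite_set Q. Proof. exact: finite_image. Qed.
Let Pfin : finite_set P. Proof. exact: finite_image. Qed.

Lemma inner_bound j (E : R) : 0 < Dj j -> 0 <= E ->
  (forall e, 0 <= e -> e ^+ 2 * alR <= Dj j ->
     e ^+ 2 * (W - (j%:~R) ^+ 2) <= (Dj j) ^+ 2 -> e <= E) ->
  \sum_(t \in Q) (if (j, t) \in A then FF (j, t) else 0)
    <= 2 * (Dj j)^-1 * (4 * E + 2).
Proof.
move=> D0 E0 HE.
set C := [set t | A (j, t)].
have CQ : C `<=` Q by move=> t Ct; exists (j, t).
have Cfin : finite_set C := sub_finite_set CQ Qfin.
set c := 2 * (Dj j)^-1.
have c0 : 0 <= c by rewrite mulr_ge0 // invr_ge0 ltW.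
have -> : \sum_(t \in Q) (if (j, t) \in A then FF (j, t) else 0) = \sum_(t \in C) c.
  rewrite -(setIidr CQ) fsbig_mkcondr; apply: eq_fsbigr => t _.
  by [].
rewrite (fsbigID [set t | 0 <= y (j, t)]) //.
have HC : forall (S : set int), S `<=` C ->
    (forall t t', S t -> S t' -> (0 <= y (j, t)) = (0 <= y (j, t'))) ->
    \sum_(t \in S) c <= (2 * E + 1) * c.
  move=> S SC Ss; apply: fsbig_count => //.
    exact: sub_finite_set SC Cfin.
  move=> t t' St St'.
  have [h1 h2] := @pair_bound j t t' (SC _ St) (SC _ St') (Ss _ _ St St').
  apply: HE => //; exact: ler0z.
have e1 : \sum_(t \in C `&` [set t | 0 <= y (j, t)]) c <= (2 * E + 1) * c.
  apply: HC; first exact: subIsetl.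
  by move=> t t' [_ /= h] [_ /= h']; rewrite h h'.
have e2 : \sum_(t \in C `&` ~` [set t | 0 <= y (j, t)]) c <= (2 * E + 1) * c.
  apply: HC; first exact: subIsetl.
  by move=> t t' [_ /= /negP/negbTE h] [_ /= /negP/negbTE h']; rewrite h h'.
apply: le_trans (lerD e1 e2) _.
by rewrite /c le_eqVlt; apply/orP; left; apply/eqP; ring.
Qed.

Definition Zj (j : int) : R :=
  if 1 <= J0 - j%:~R then J0 * (J0 - j%:~R) else alR * Dj j.
Definition Hf (j : int) : R := 4 * (Dj j)^-1 + 8 * (Num.sqrt (Zj j))^-1.

Lemma inner_H j : P j ->
  \sum_(t \in Q) (if (j, t) \in A then FF (j, t) else 0) <= Hf j.
Proof.
move=> [x Ax xj].
have z0 := A_z _ Ax; rewrite xj in z0.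
have gal0 : 0 < g * al by rewrite mulr_gt0.
have j0 : 0 < j by nia.
have D0 : 0 < Dj j by rewrite /Dj ltr0z mulr_gt0.
have j0R : 0 < (j%:~R : R) by rewrite ltr0z.
have J0p := J00; have alp := alR0; have Wsq := J0sq.
have Z0 : 0 < Zj j.
  rewrite /Zj; case: ifP => h; last exact: mulr_gt0.
  by apply: mulr_gt0 => //; lra.
set E := Dj j / Num.sqrt (Zj j).
have s0 : 0 < Num.sqrt (Zj j) by rewrite sqrtr_gt0.
have E0 : 0 <= E by rewrite /E divr_ge0 // ltW.
apply: le_trans (@inner_bound j E D0 E0 _) _.
  move=> e e0 h1 h2; apply: le_div_sqrt => //; first exact: ltW.
  rewrite /Zj; case: ifP => h.
    apply: le_trans h2; apply: ler_wpM2l; first exact: sqr_ge0.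
    rewrite -Wsq; nra.
  have -> : e ^+ 2 * (alR * Dj j) = (e ^+ 2 * alR) * Dj j by ring.
  by rewrite expr2; apply: ler_wpM2r => //; exact: ltW.
rewrite /E /Hf le_eqVlt; apply/orP; left; apply/eqP.
have h3 : (0 : R) < (2 * j - g * al)%:~R by rewrite ltr0z.
rewrite rmorphB !rmorphM /= in h3.
field; rewrite (gt_eqF s0) (gt_eqF h3) /=.
by rewrite intr_eq0 gt_eqF.
Qed.

Lemma intrn (i : nat) : ((i%:Z)%:~R : R) = i%:R.
Proof. by []. Qed.

Definition jl : R := Num.max (ga / 2) (ga - J0).
Definition jlo : int := Num.floor jl + 1.
Definition nn : nat := (Num.trunc (ga + J0 - jlo%:~R)).+1.
Definition mm : nat := Num.trunc (J0 - jlo%:~R).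

Let gal1 : 1 <= g * al.
Proof. have := mulr_gt0 g0 al0; lia. Qed.
Let ga1 : 1 <= ga.
Proof. by rewrite /ga ler1z. Qed.
Let g1R : 1 <= (g%:~R : R).
Proof. rewrite ler1z; lia. Qed.
Let gaE : ga = g%:~R * alR.
Proof. by rewrite /ga rmorphM. Qed.

Let jl1 : ga / 2 <= jl.
Proof. by rewrite /jl le_max lexx. Qed.
Let jl2 : ga - J0 <= jl.
Proof. by rewrite /jl le_max lexx orbT. Qed.
Let jlo_gt : jl < jlo%:~R.
Proof. by rewrite /jlo floorD1_gt. Qed.
Let zlo_ge1 : 1 <= 2 * jlo - g * al.
Proof.
have : (0 : R) < (2 * jlo - g * al)%:~R.
  rewrite rmorphB rmorphM /= -/ga; have := jl1; have := jlo_gt; lra.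
rewrite ltr0z; lia.
Qed.
Let jlo_pos : 0 < jlo.
Proof. have := zlo_ge1; have := gal1; lia. Qed.

Let DjE (i : nat) : Dj (jlo + i%:Z) = (g * ((2 * jlo - g * al) + 2 * i%:Z))%:~R.
Proof. by rewrite /Dj; congr intr; ring. Qed.

Let Dj_ge (i : nat) : (i.+1)%:R <= Dj (jlo + i%:Z).
Proof.
by rewrite DjE -intrn ler_int; apply: int_aux1 g0 zlo_ge1.
Qed.

Let Dj_pos (i : nat) : 0 < Dj (jlo + i%:Z).
Proof. by apply: lt_le_trans (Dj_ge i); rewrite ltr0n. Qed.

Lemma Hf_ge0 (i : nat) : 0 <= Hf (jlo + i%:Z).
Proof.
rewrite /Hf addr_ge0 // mulr_ge0 // invr_ge0 ?sqrtr_ge0 //.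
exact: ltW (Dj_pos i).
Qed.

Lemma P_sub : P `<=` [set jlo + i%:Z | i in `I_nn].
Proof.
move=> j [x Ax xj].
have z0 := A_z _ Ax; have [h1 h2] := A_J0 _ Ax; rewrite xj in z0 h1 h2.
have jgt : jl < j%:~R.
  rewrite /jl gt_max h1 andbT.
  have : (0 : R) < (2 * j - g * al)%:~R by rewrite ltr0z.
  rewrite rmorphB rmorphM /= -/ga; lra.
have jge : jlo <= j.
  by rewrite /jlo; apply: int_aux3; rewrite floor_lt_int.
exists `|j - jlo|%N; last by apply: int_aux4.
rewrite /= /nn ltnS truncn_ge_nat.
  by rewrite -intrn gez0_abs ?subr_ge0 // rmorphB /=; lra.
have : jlo%:~R <= (j%:~R : R) by rewrite ler_int.
lra.
Qed.

Lemma sum_outer : \sum_(j \in P) Hf j <= \sum_(i < nn) Hf (jlo + i%:Z).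
Proof.
have rf : finite_set [set jlo + i%:Z | i in `I_nn] by exact: finite_image (finite_II nn).
have r0 : forall x, [set jlo + i%:Z | i in `I_nn] x -> 0 <= Hf x.
  by move=> _ [i _ <-]; exact: Hf_ge0.
apply: le_trans (@fsbig_subset_le R _ P _ Hf rf P_sub r0) _.
rewrite fsbig_image; last first.
  by move=> i i' _ _ /addrI /eqP; rewrite eqz_nat => /eqP.
by rewrite -fsbig_ord.
Qed.

Lemma sum_decomp :
  \sum_(p \in Lk kF k) 2 * ((sqnorm p : R) - sqnorm (subZ2 p k))^-1 =
  \sum_(j \in P) \sum_(t \in Q) (if (j, t) \in A then FF (j, t) else 0).
Proof.
have LE : Lk kF k = ph @` A.
  apply/seteqP; split => [p Lp | _ [x Ax <-] //].
  exists (psi a' b' u v p); last exact: (@phiK a' b' u v huv).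
  by rewrite /A /preimage /= /ph (@phiK a' b' u v huv).
rewrite LE fsbig_image; last first.
  by move=> x1 x2 _ _ e; rewrite -(@psiK a' b' u v huv x1) -/ph e (@psiK a' b' u v huv).
transitivity (\sum_(x \in A) FF x).
  apply: eq_fsbigr => x Ax; rewrite /FF /Dj.
  by rewrite -(@I3 a' b' u v g huv x) rmorphB.
have AS : A `<=` P `*` Q by move=> x Ax; split; exists x.
rewrite pair_fsbig // -(setIidr AS) fsbig_mkcondr.
by apply: eq_fsbigr => -[i j] _ /=; rewrite (setIidr AS).
Qed.

Let nnle (c : R) : 0 <= c -> ga + J0 - jl <= c -> nn%:R <= c + 1.
Proof.
move=> c0 hc; rewrite /nn -natr1.
set x := ga + J0 - jlo%:~R.
have hx : x < c by have := jlo_gt; rewrite /x; lra.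
case: (ltP x 1) => h.
  have : (Num.trunc x <= 0)%N by rewrite truncn_le_nat.
  rewrite leqn0 => /eqP ->; lra.
have /andP[t1 _] := truncn_itv (le_trans ler01 h : 0 <= x).
lra.
Qed.

Lemma part1 : \sum_(i < nn) (Dj (jlo + i%:Z))^-1 <= 4 + ln (12 * kF ^+ 2 + 1).
Proof.
have kk0 : 0 <= kF ^+ 2 := sqr_ge0 kF.
have L0 : 0 <= ln (12 * kF ^+ 2 + 1 : R) by apply: ln_ge0; lra.
have J0p := J00; have alp := alR0; have Wsq := J0sq; have kFp := kF0.
have ga1' := ga1; have g1' := g1R; have jl1' := jl1; have jl2' := jl2.
have jlo' := jlo_gt.
case: (ltP ga (4 * J0)) => hc.
  apply: le_trans (_ : \sum_(i < nn) ((i.+1)%:R)^-1 <= _).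
    apply: ler_sum => i _; rewrite lef_pV2 ?posrE ?ltr0n ?Dj_pos //; exact: Dj_ge.
  apply: le_trans (harm _ nn) _.
  have nnb : nn%:R <= 12 * kF ^+ 2 + 1.
    have J0k : J0 < 4 * kF ^+ 2.
      have h1 : alR <= ga by rewrite gaE; nra.
      have h2 : J0 * J0 < J0 * (4 * kF ^+ 2).
        have e1 : J0 * J0 = alR * kF ^+ 2 by rewrite -expr2 Wsq.
        have kF2 : 0 < kF ^+ 2 by rewrite exprn_gt0.
        have a1 : alR * kF ^+ 2 <= ga * kF ^+ 2 by rewrite ler_pM2r.
        have a2 : ga * kF ^+ 2 < (4 * J0) * kF ^+ 2 by rewrite ltr_pM2r.
        lra.
      by rewrite ltr_pM2l in h2.
    apply: le_trans (@nnle (3 * J0) _ _) _; lra.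
  have : ln (nn%:R) <= ln (12 * kF ^+ 2 + 1 : R).
    by rewrite ler_ln ?posrE ?ltr0n //; lra.
  lra.
have ga0 : 0 < ga / 2 by lra.
apply: le_trans (_ : \sum_(i < nn) (ga / 2)^-1 <= _).
  apply: ler_sum => i _; rewrite lef_pV2 ?posrE ?Dj_pos //.
  have h1 : ((2 * jlo - g * al)%:~R : R) <= Dj (jlo + i%:Z).
    by rewrite DjE ler_int; apply: int_aux2 g0 zlo_ge1.
  have h2 : ((2 * jlo - g * al)%:~R : R) = 2 * jlo%:~R - ga by rewrite rmorphB rmorphM.
  lra.
rewrite sumr_const card_ord -mulr_natl.
have nb : nn%:R <= ga / 2 + 1 by apply: nnle; lra.
have i0 : 0 < (ga / 2)^-1 by rewrite invr_gt0.
have i1 : (ga / 2)^-1 <= 2.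
  rewrite -[X in _ <= X]invrK lef_pV2 ?posrE //; lra.
have e : (ga / 2 + 1) * (ga / 2)^-1 = 1 + (ga / 2)^-1 by field; lra.
have : nn%:R * (ga / 2)^-1 <= (ga / 2 + 1) * (ga / 2)^-1 by rewrite ler_pM2r.
lra.
Qed.

Lemma Zsplit (j : int) : (Num.sqrt (Zj j))^-1 =
  (if 1 <= J0 - j%:~R then (Num.sqrt (J0 * (J0 - j%:~R)))^-1 else 0) +
  (if 1 <= J0 - j%:~R then 0 else (Num.sqrt (alR * Dj j))^-1).
Proof. by rewrite /Zj; case: ifP => _; rewrite ?addr0 ?add0r. Qed.

Let mmJ : mm%:R <= J0.
Proof.
have := jlo_pos; rewrite -(ltr0z R) => j0.
have J0p := J00.
case: (ltP (J0 - jlo%:~R) 1) => h.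
  have : (mm <= 0)%N by rewrite /mm truncn_le_nat.
  by rewrite leqn0 => /eqP ->; lra.
have /andP[t1 _] := truncn_itv (le_trans ler01 h : 0 <= J0 - jlo%:~R).
rewrite /mm; lra.
Qed.

Lemma part2a : \sum_(i < nn) (if 1 <= J0 - (jlo + i%:Z)%:~R
     then (Num.sqrt (J0 * (J0 - (jlo + i%:Z)%:~R)))^-1 else 0) <= 2.
Proof.
have J0p := J00.
pose f := fun i : nat => if 1 <= J0 - (jlo + i%:Z)%:~R
     then (Num.sqrt (J0 * (J0 - (jlo + i%:Z)%:~R)))^-1 else 0.
apply: le_trans (@G1 R f (fun i : nat => (Num.sqrt (J0 * ((mm - i)%N)%:R))^-1) nn mm _ _) _.
- by move=> i; rewrite invr_ge0 sqrtr_ge0.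
- move=> i inn; rewrite /f; case: ifP => h; last by case: ifP => _ //; rewrite invr_ge0 sqrtr_ge0.
  rewrite rmorphD /= intrn in h.
  have im : (i < mm)%N by rewrite /mm truncn_gt_nat -natr1; lra.
  rewrite im.
  have X0 : 0 <= J0 - jlo%:~R by have := ler0n R i; lra.
  have /andP[mX _] := truncn_itv X0.
  have b0 : 0 < J0 * ((mm - i)%N)%:R by rewrite mulr_gt0 // ltr0n subn_gt0.
  rewrite lef_pV2 ?posrE ?sqrtr_gt0 //; last by apply: lt_le_trans b0 _; rewrite rmorphD /= intrn ler_pM2l //; rewrite natrB ?(ltnW im) //; rewrite /mm in mX; lra.
  rewrite ler_sqrt; last by apply: mulr_ge0; lra.
  rewrite rmorphD /= intrn ler_pM2l // natrB ?(ltnW im) //.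
  rewrite /mm in mX; lra.
rewrite (eq_bigr (fun i : 'I_mm => (Num.sqrt J0)^-1 * (Num.sqrt ((mm - i)%N)%:R)^-1)); last first.
  by move=> i _; rewrite sqrtrM ?invfM // ltW.
rewrite -mulr_sumr sum_rev_sqrt.
have s0 : 0 < Num.sqrt J0 by rewrite sqrtr_gt0.
apply: le_trans (ler_wpM2l _ (sum_invsqrt _ mm)) _; first by rewrite invr_ge0 ltW.
have sm : Num.sqrt mm%:R <= Num.sqrt J0 by rewrite ler_sqrt; [exact: mmJ | exact: ltW].
have e : (Num.sqrt J0)^-1 * (2 * Num.sqrt J0) = 2 by field; rewrite gt_eqF.
rewrite -[X in _ <= X]e; apply: ler_wpM2l; first by rewrite invr_ge0 ltW.
by rewrite ler_pM2l.
Qed.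

Lemma part2b : \sum_(i < nn) (if 1 <= J0 - (jlo + i%:Z)%:~R
     then 0 else (Num.sqrt (alR * Dj (jlo + i%:Z)))^-1) <= 4.
Proof.
have J0p := J00; have ga1' := ga1; have alp := alR0.
pose f := fun i : nat => if 1 <= J0 - (jlo + i%:Z)%:~R
     then 0 else (Num.sqrt (alR * Dj (jlo + i%:Z)))^-1.
apply: le_trans (@G2 R f (fun k : nat => (Num.sqrt (ga * (k.+1)%:R))^-1) nn mm _ _) _.
- by move=> i; rewrite invr_ge0 sqrtr_ge0.
- move=> i inn; rewrite /f; case: ifP => h; first by case: ifP => _ //; rewrite invr_ge0 sqrtr_ge0.
  move/negbT: h; rewrite -ltNge rmorphD /= intrn => h.
  have im : (mm <= i)%N by rewrite /mm truncn_le_nat -natr1; lra.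
  rewrite im.
  have b0 : 0 < ga * ((i - mm)%N.+1)%:R by rewrite mulr_gt0 // ?ltr0n //; lra.
  rewrite lef_pV2 ?posrE ?sqrtr_gt0 //; last by rewrite mulr_gt0 // Dj_pos.
  rewrite ler_sqrt; last by apply: mulr_ge0; [exact: ltW | exact: ltW (Dj_pos i)].
  have -> : alR * Dj (jlo + i%:Z) = ga * ((2 * jlo - g * al) + 2 * i%:Z)%:~R.
    by rewrite DjE gaE !rmorphM /=; ring.
  rewrite ler_pM2l; last by lra.
  rewrite -intrn ler_int; have := zlo_ge1; lia.
rewrite (eq_bigr (fun i : 'I_(nn - mm) => (Num.sqrt ga)^-1 * (Num.sqrt (i.+1)%:R)^-1)); last first.
  by move=> i _; rewrite sqrtrM ?invfM //; lra.
rewrite -mulr_sumr.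
have s0 : 0 < Num.sqrt ga by rewrite sqrtr_gt0; lra.
apply: le_trans (ler_wpM2l _ (sum_invsqrt _ (nn - mm))) _; first by rewrite invr_ge0 ltW.
have nm : ((nn - mm)%N)%:R <= 4 * ga.
  have t1 : J0 - jlo%:~R < mm.+1%:R by apply: truncnS_gt.
  rewrite -natr1 in t1.
  case: (ltP (ga + J0 - jlo%:~R) 1) => h.
    have : (Num.trunc (ga + J0 - jlo%:~R) <= 0)%N by rewrite truncn_le_nat.
    rewrite leqn0 => /eqP t0.
    have : ((nn - mm)%N <= 1)%N by rewrite /nn t0 leq_subr.
    rewrite -(ler_nat R) => h2; lra.
  have /andP[t2 _] := truncn_itv (le_trans ler01 h : 0 <= ga + J0 - jlo%:~R).
  case: (leqP nn mm) => h1.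
    by move: (h1); rewrite -subn_eq0 => /eqP ->; lra.
  rewrite natrB ?(ltnW h1) // /nn -natr1.
  lra.
set s := Num.sqrt ((nn - mm)%N)%:R.
have sq1 : s ^+ 2 = ((nn - mm)%N)%:R by rewrite sqr_sqrtr.
have sq2 : Num.sqrt ga ^+ 2 = ga by rewrite sqr_sqrtr //; lra.
have s0' : 0 <= s by rewrite sqrtr_ge0.
have ss : s <= 2 * Num.sqrt ga by nra.
have e : (Num.sqrt ga)^-1 * (2 * (2 * Num.sqrt ga)) = 4 by field; rewrite gt_eqF.
rewrite -[X in _ <= X]e; apply: ler_wpM2l; first by rewrite invr_ge0 ltW.
by rewrite ler_pM2l.
Qed.

Lemma main_sec : \sum_(p \in Lk kF k) 2 * ((sqnorm p : R) - sqnorm (subZ2 p k))^-1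
   <= 64 + 4 * ln (12 * kF ^+ 2 + 1).
Proof.
rewrite sum_decomp.
apply: le_trans (_ : \sum_(j \in P) Hf j <= _).
  by apply: fsbig_le => // j Pj; exact: inner_H.
apply: le_trans sum_outer _.
rewrite (eq_bigr (fun i : 'I_nn => 4 * (Dj (jlo + i%:Z))^-1 + 8 *
   ((if 1 <= J0 - (jlo + i%:Z)%:~R
     then (Num.sqrt (J0 * (J0 - (jlo + i%:Z)%:~R)))^-1 else 0) +
    (if 1 <= J0 - (jlo + i%:Z)%:~R
     then 0 else (Num.sqrt (alR * Dj (jlo + i%:Z)))^-1)))); last first.
  by move=> i _; rewrite /Hf Zsplit.
rewrite big_split /= -!mulr_sumr big_split /=.
have := part1; have := part2a; have := part2b.
lra.
Qed.
End D.
Lemma bezout_data (a b : int) : (a, b) != (0, 0) ->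
  exists g a' b' u v : int, [/\ 0 < g, a = g * a', b = g * b' & u * a' + v * b' = 1].
Proof.
move=> nz.
set g := gcdz a b.
have g0 : g != 0.
  rewrite /g gcdz_eq0; apply: contra nz => /andP[/eqP -> /eqP ->] //.
have gp : 0 < g by rewrite lt_def g0 /g /gcdz.
have [u [v huv]] := Bezoutz a b.
have ea : (a %/ g)%Z * g = a by apply: divzK; exact: dvdz_gcdl.
have eb : (b %/ g)%Z * g = b by apply: divzK; exact: dvdz_gcdr.
exists g, (a %/ g)%Z, (b %/ g)%Z, u, v; split => //.
- by rewrite mulrC ea.
- by rewrite mulrC eb.
apply: (mulIf g0); rewrite mul1r.
transitivity (u * a + v * b); last exact: huv.
by rewrite -[in RHS]ea -[in RHS]eb; ring.
Qed.

Lemma N_ge_trunc (R : realType) (kF : R) : finite_set (BF kF) ->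
  (Num.trunc kF <= NF kF)%N.
Proof.
move=> Bfin; rewrite /NF fsbig_finite // sum1_size.
set m := Num.trunc kF.
rewrite -(size_iota 0 m) -(size_map (fun i : nat => (i%:Z, 0%:Z))).
apply: uniq_leq_size.
  by rewrite map_inj_uniq ?iota_uniq // => i j [].
move=> p /mapP [i]; rewrite mem_iota add0n => im ->.
rewrite in_fset_set // inE /BF /= /sqnorm /=.
have h : i.+1%:R <= kF by rewrite -truncn_gt_nat.
have i0 : (0 : R) <= i%:R by [].
rewrite expr0n addr0 rmorphXn /= intrn.
rewrite -natr1 in h; nra.
Qed.

Theorem propositionA1 (R : realType) :
  exists C : R, 0 < C /\
    forall kF : R, admissible_kF kF -> (2 <= NF kF)%N ->
    forall k : Z2,
      hbar kF ^+ 2 * (\sum_(p \in Lk kF k) (lambda kF k p)^-1)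
        <= C * ln ((NF kF)%:R).
Proof.
exists 200; split; first lra.
move=> kF [kF0 _] N2 k.
have Bfin : finite_set (BF kF).
  apply: contrapT => nf; move: N2; rewrite /NF fsbig_dflt //.
  have -> : BF kF `&` (fun=> 1%N) @^-1` [set~ 0%N] = BF kF.
    by apply/seteqP; split => [x []| x Bx] //.
  exact: nf.
set N := NF kF.
have NR2 : (2 : R) <= N%:R by rewrite (ler_nat R 2 N).
have lnN : 2^-1 <= ln (N%:R : R).
  apply: le_trans (ln2_ge R) _.
  by rewrite ler_ln ?posrE //; lra.
have hb0 : hbar kF != 0.
  rewrite /hbar invr_eq0 sqrtr_eq0 -ltNge -/N; lra.
rewrite mulr_fsumr.
rewrite (eq_fsbigr (fun p => 2 * ((sqnorm p : R) - sqnorm (subZ2 p k))^-1)); last first.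
  move=> p _; rewrite /lambda; set D := (_ - _ : R).
  case: (eqVneq D 0) => [->|D0]; first by rewrite !(mulr0, invr0).
  by field; rewrite D0 hb0.
have L0 : 0 <= ln (N%:R : R) by lra.
case: (eqVneq k (0, 0)) => [k0|knz].
  have -> : Lk kF k = set0.
    apply/seteqP; split => // p /LkP [h1 h2].
    have : subZ2 p k = p by rewrite k0; case: p {h1 h2} => p1 p2; rewrite /subZ2 /= !subr0.
    move=> e; rewrite e in h2; lra.
  by rewrite fsbig_set0 mulr_ge0 //; lra.
case: k knz => a b knz.
have [g [a' [b' [u [v [g0 ea eb huv]]]]]] := @bezout_data a b knz.
have kE : (a, b) = kk a' b' g by rewrite /kk ea eb.
rewrite kE.
apply: le_trans (@main_sec R kF a' b' u v g kF0 g0 huv Bfin) _.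
have tN := @N_ge_trunc R kF Bfin.
have kFN : kF < N%:R + 1.
  apply: lt_le_trans (truncnS_gt kF) _.
  by rewrite -natr1 lerD2r ler_nat.
have b1 : 12 * kF ^+ 2 + 1 <= 64 * (N%:R : R) ^+ 2.
  have : kF ^+ 2 <= (N%:R + 1) ^+ 2 by nra.
  nra.
have b2 : ln (12 * kF ^+ 2 + 1) <= ln (64 * (N%:R : R) ^+ 2).
  rewrite ler_ln ?posrE //; first by have := sqr_ge0 kF; lra.
  by rewrite mulr_gt0 // exprn_gt0 //; lra.
have b3 : ln (64 * (N%:R : R) ^+ 2) = 6 * ln (2 : R) + 2 * ln (N%:R : R).
  rewrite lnM ?posrE ?exprn_gt0 //; last by lra.
  rewrite (_ : (64 : R) = 2 ^+ 6); last by rewrite -natrX.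
  rewrite !lnXn //; last by lra.
  by rewrite !mulr_natl.
have b4 : ln (2 : R) <= ln (N%:R : R) by rewrite ler_ln ?posrE //; lra.
rewrite b3 in b2.
lra.
Qed.
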